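(* Let $X=(X,b)$ be a $\mathbb T$-category. The following are equivalent: (i) $X$ is L-complete; (ii) $X$ is L-injective; (iii) the Yoneda functor $y:X\to\tilde X$ has a pseudo left-inverse, i.e. a $\mathbb T$-functor $R:\tilde X\to X$ with $R\cdot y\cong 1_X$.
   Context: Let $\mathsf V=(\mathsf V,\otimes,k)$ be a commutative unital quantale (complete lattice, commutative associative $\otimes$ with neutral $k$, $u\otimes(-)$ preserving suprema), internal hom $z\le u\multimap v\iff z\otimes u\le v$. A $\mathsf V$-relation $r$ from $X$ to $Y$ is a map $X\times Y\to\mathsf V$; composition $(s\cdot r)(x,z)=\bigvee_y r(x,y)\otimes s(y,z)$, converse $r^\circ(y,x)=r(x,y)$, pointwise order; a map $f$ is the relation $f(x,y)=k$ if $f(x)=y$, $\bot$ otherwise. Let $\mathbb T=(T,e,m)$ be a Set-monad with $T1=1$, $T$ sending pullbacks to weak pullbacks and each naturality square of $m$ a weak pullback, and $\xi:T\mathsf V\to\mathsf V$ with $\xi e_{\mathsf V}=1$, $\xi\cdot T\xi=\xi\cdot m_{\mathsf V}$, $\xi\cdot T(\otimes)=\otimes\cdot\langle\xi T\pi_1,\xi T\pi_2\rangle$, $\xi\cdot Tk=k$, and such that $\varphi\mapsto\xi\cdot T\varphi$, $\mathsf V^X\to\mathsf V^{TX}$, is natural w.r.t. the monotone maps $P_{\mathsf V}f:\mathsf V^X\to\mathsf V^Y$, $P_{\mathsf V}f(\varphi)(y)=\bigvee_{f(x)=y}\varphi(x)$ (a strict topological theory). For a relation $r$ from $X$ to $Y$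 let $T_\xi r(\mathfrak x,\mathfrak y)=\bigvee\{\xi(Tr(\mathfrak w))\mid\mathfrak w\in T(X\times Y),T\pi_1\mathfrak w=\mathfrak x,T\pi_2\mathfrak w=\mathfrak y\}$. A $\mathbb T$-relation from $X$ to $Y$ is a $\mathsf V$-relation from $TX$ to $Y$; Kleisli composition $b\circ a=b\cdot T_\xi a\cdot m_X^\circ$. A $\mathbb T$-category $(X,a)$ has $k\le a(e_X(x),x)$ and $a\circ a\le a$; a $\mathbb T$-functor $f:(X,a)\to(Y,b)$ satisfies $a(\mathfrak x,x)\le b(Tf(\mathfrak x),f(x))$; subsets carry $a_M(\mathfrak x,x)=a(Ti(\mathfrak x),x)$. $E=(1,k)$. A $\mathbb T$-module $\varphi:(X,a)\to(Y,b)$ is a $\mathbb T$-relation with $\varphi\circ a\le\varphi$, $b\circ\varphi\le\varphi$ (identity $a$). For a $\mathbb T$-functor $f:Z\to Y$: $f_*(\mathfrak z,y)=b(Tf(\mathfrak z),y)$, $f^*(\mathfrak y,z)=b(\mathfrak y,f(z))$. For modules $\varphi:(Z,c)\to X$, $\psi:X\to Z$, $\varphi\dashv\psi$ means $c\le\psi\circ\varphi$, $\varphi\circ\psi\le a$. $f\le g$ iff $f^*\le g^*$ (equivalently $k\le b(e_Y(f(x)),g(x))$ for all $x$); $f\cong g$ iff $f\le g\le f$. $X$ is L-complete if each adjunction $\varphi\dashv\psi$ ($\varphi:Z\to X$) is $f_*\dashv f^*$ for some $\mathbb T$-functor $f:Z\to X$. $f:(A,a)\to(B,b)$ is fully faithful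 if $a(\mathfrak x,x)=b(Tf(\mathfrak x),f(x))$, L-dense if $f_*\circ f^*=b$, an L-equivalence if both; $X$ is L-injective if for each L-equivalence $i:A\to B$ and $\mathbb T$-functor $h:A\to X$ there is $g:B\to X$ with $g\cdot i\cong h$. Yoneda: $\mathsf V$ is a $\mathbb T$-category with $\hom_\xi(\mathfrak v,v)=\xi(\mathfrak v)\multimap v$; $|X|=(TX,m_X)$; $|X|\multimap\mathsf V$ is the set of $\mathbb T$-functors $|X|\to\mathsf V$ with structure $[m_X,\hom_\xi](\mathfrak p,h)=\bigwedge\{\xi(T\mathrm{ev}(\mathfrak q))\multimap h(m_X(T\pi_1\mathfrak q))\mid\mathfrak q\in T(TX\times(|X|\multimap\mathsf V)),T\pi_2\mathfrak q=\mathfrak p\}$, $\mathrm{ev}(\mathfrak x,\varphi)=\varphi(\mathfrak x)$. With $r(\mathfrak x,\mathfrak y)=\bigvee_{m_X(\mathfrak X)=\mathfrak x}T_\xi b(\mathfrak X,\mathfrak y)$, $X^{\mathrm{op}}=(TX,c)$ with $c(\mathfrak X,\mathfrak y)=T_\xi(r^\circ)(\mathfrak X,e_{TX}(\mathfrak y))$. $\hat X\subseteq|X|\multimap\mathsf V$ consists of those $\psi$ which are also $\mathbb T$-functors $X^{\mathrm{op}}\to\mathsf V$ (induced structure); $y:X\to\hat X$, $y(x)(\mathfrak x)=b(\mathfrak x,x)$. Each $\psi\in\hat X$ is a $\mathbb T$-module $X\to E$; it is tight if this module has a left adjoint; $\tilde X\subseteq\hat X$ is the set of tight elements (induced structure),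 and $y$ lands in $\tilde X$. *)

(* Defs.v *)
Unset Implicit Arguments.
Unset Strict Implicit.

Record quantale := Quantale {
  qcar :> Type;
  qle : qcar -> qcar -> Prop;
  qsup : (qcar -> Prop) -> qcar;
  qtens : qcar -> qcar -> qcar;
  qk : qcar;
  qle_refl : forall u, qle u u;
  qle_trans : forall u v w, qle u v -> qle v w -> qle u w;
  qle_antisym : forall u v, qle u v -> qle v u -> u = v;
  qsup_ub : forall (S : qcar -> Prop) u, S u -> qle u (qsup S);
  qsup_least : forall (S : qcar -> Prop) w,
      (forall u, S u -> qle u w) -> qle (qsup S) w;
  qtens_comm : forall u v, qtens u v = qtens v u;
  qtens_assoc : forall u v w, qtens u (qtens v w) = qtens (qtens u v) w;
  qtens_unit : forall u, qtens qk u = u;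
  qtens_sup : forall u (S : qcar -> Prop),
      qtens u (qsup S) = qsup (fun v => exists s, S s /\ v = qtens u s)
}.
Arguments qle {q}. Arguments qsup {q}. Arguments qtens {q}. Arguments qk {q}.

Definition qinf {Q : quantale} (S : Q -> Prop) : Q :=
  qsup (fun v => forall s, S s -> qle v s).
Definition qhom {Q : quantale} (u v : Q) : Q :=
  qsup (fun z => qle (qtens z u) v).

Record monad := Monad {
  T : Type -> Type;
  fmap : forall A B : Type, (A -> B) -> T A -> T B;
  eta : forall A : Type, A -> T A;
  mu : forall A : Type, T (T A) -> T A;
  fmap_id : forall A (x : T A), fmap A A (fun a => a) x = x;
  fmap_comp : forall A B C (f : A -> B) (g : B -> C) (x : T A),
      fmap A C (fun a => g (f a)) x = fmap B C g (fmap A B f x);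
  eta_nat : forall A B (f : A -> B) (a : A), fmap A B f (eta A a) = eta B (f a);
  mu_nat : forall A B (f : A -> B) (X : T (T A)),
      fmap A B f (mu A X) = mu B (fmap (T A) (T B) (fmap A B f) X);
  mu_eta_l : forall A (x : T A), mu A (eta (T A) x) = x;
  mu_eta_r : forall A (x : T A), mu A (fmap A (T A) (eta A) x) = x;
  mu_assoc : forall A (X : T (T (T A))),
      mu A (mu (T A) X) = mu A (fmap (T (T A)) (T A) (mu A) X)
}.
Arguments fmap {m A B}. Arguments eta {m A}. Arguments mu {m A}.

Definition T_one (M : monad) : Prop :=
  (forall u v : T M unit, u = v).

(* T sends (the canonical, hence every) pullback to a weak pullback *)
Definition T_weak_pullbacks (M : monad) : Prop :=
  forall (A B C : Type) (f : A -> C) (g : B -> C) (x : T M A) (y : T M B),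
    fmap f x = fmap g y ->
    exists w : T M {p : A * B | f (fst p) = g (snd p)},
      fmap (fun p => fst (proj1_sig p)) w = x /\
      fmap (fun p => snd (proj1_sig p)) w = y.

(* each naturality square of mu is a weak pullback *)
Definition mu_weak_pullbacks (M : monad) : Prop :=
  forall (A B : Type) (f : A -> B) (a : T M A) (Y : T M (T M B)),
    fmap f a = mu Y ->
    exists W : T M (T M A), mu W = a /\ fmap (fmap f) W = Y.

Section Theory.
Variable Q : quantale.
Variable M : monad.
Local Notation T := (T M).
Variable xi : T Q -> Q.

Definition PV {X Y : Type} (f : X -> Y) (phi : X -> Q) : Y -> Q :=
  fun y => qsup (fun v => exists x, f x = y /\ v = phi x).

Record strict_topological_theory : Prop := {
  xi_eta : forall v : Q, xi (eta v) = v;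
  xi_mu : forall W : T (T Q), xi (fmap xi W) = xi (mu W);
  xi_tens : forall w : T (Q * Q),
      xi (fmap (fun p => qtens (fst p) (snd p)) w)
      = qtens (xi (fmap fst w)) (xi (fmap snd w));
  xi_k : forall u : T unit, xi (fmap (fun _ => qk) u) = qk;
  xi_nat : forall (X Y : Type) (f : X -> Y) (phi : X -> Q) (y : T Y),
      xi (fmap (PV f phi) y) = PV (fmap f) (fun x => xi (fmap phi x)) y
}.

Definition vrel (X Y : Type) := X -> Y -> Q.
Definition rcomp {X Y Z} (r : vrel X Y) (s : vrel Y Z) : vrel X Z :=
  fun x z => qsup (fun v => exists y, v = qtens (r x y) (s y z)).
Definition rconv {X Y} (r : vrel X Y) : vrel Y X := fun y x => r x y.
(* a map as a relation: k if f x = y, bottom (= sup of the empty set) otherwise *)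
Definition rmap {X Y} (f : X -> Y) : vrel X Y :=
  fun x y => qsup (fun v => f x = y /\ v = qk).
Definition rle {X Y} (r s : vrel X Y) : Prop := forall x y, qle (r x y) (s x y).

Definition Txi {X Y} (r : vrel X Y) : vrel (T X) (T Y) :=
  fun x y => qsup (fun v => exists w : T (X * Y),
     fmap fst w = x /\ fmap snd w = y /\ v = xi (fmap (fun p => r (fst p) (snd p)) w)).

(* Kleisli composition  b o a = b . T_xi a . m_X^o  (written kcomp a b) *)
Definition kcomp {X Y Z} (a : vrel (T X) Y) (b : vrel (T Y) Z) : vrel (T X) Z :=
  rcomp (rcomp (rconv (rmap (@mu M X))) (Txi a)) b.

Record Tgraph := Tgr { tcar : Type; tstr : vrel (T tcar) tcar }.

Definition is_Tcat (X : Tgraph) : Prop :=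
  (forall x, qle qk (tstr X (eta x) x)) /\
  rle (kcomp (tstr X) (tstr X)) (tstr X).

Definition Tfunctor (X Y : Tgraph) (f : tcar X -> tcar Y) : Prop :=
  forall (x : T (tcar X)) (x' : tcar X), qle (tstr X x x') (tstr Y (fmap f x) (f x')).

Definition subgraph (X : Tgraph) (P : tcar X -> Prop) : Tgraph :=
  Tgr {x | P x} (fun (x : T {x | P x}) (x' : {x | P x}) =>
         tstr X (fmap (@proj1_sig _ _) x) (proj1_sig x')).

Definition E : Tgraph := Tgr unit (fun (_ : T unit) (_ : unit) => qk).

Definition is_module (X Y : Tgraph) (phi : vrel (T (tcar X)) (tcar Y)) : Prop :=
  rle (kcomp (tstr X) phi) phi /\ rle (kcomp phi (tstr Y)) phi.

Definition flow (Z Y : Tgraph) (f : tcar Z -> tcar Y) : vrel (T (tcar Z)) (tcar Y) :=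
  fun z y => tstr Y (fmap f z) y.
Definition fup (Z Y : Tgraph) (f : tcar Z -> tcar Y) : vrel (T (tcar Y)) (tcar Z) :=
  fun y z => tstr Y y (f z).

(* phi -| psi for phi : Z -> X, psi : X -> Z *)
Definition adjoint (Z X : Tgraph) (phi : vrel (T (tcar Z)) (tcar X))
  (psi : vrel (T (tcar X)) (tcar Z)) : Prop :=
  rle (tstr Z) (kcomp phi psi) /\ rle (kcomp psi phi) (tstr X).

Definition fle (X Y : Tgraph) (f g : tcar X -> tcar Y) : Prop :=
  rle (fup X Y f) (fup X Y g).
Definition fiso (X Y : Tgraph) (f g : tcar X -> tcar Y) : Prop :=
  fle X Y f g /\ fle X Y g f.

Definition L_complete (X : Tgraph) : Prop :=
  forall (Z : Tgraph), is_Tcat Z ->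
  forall (phi : vrel (T (tcar Z)) (tcar X)) (psi : vrel (T (tcar X)) (tcar Z)),
    is_module Z X phi -> is_module X Z psi -> adjoint Z X phi psi ->
    exists f : tcar Z -> tcar X, Tfunctor Z X f /\
      (forall z x, phi z x = flow Z X f z x) /\
      (forall x z, psi x z = fup Z X f x z).

Definition fully_faithful (A B : Tgraph) (f : tcar A -> tcar B) : Prop :=
  forall x x', tstr A x x' = tstr B (fmap f x) (f x').
Definition L_dense (A B : Tgraph) (f : tcar A -> tcar B) : Prop :=
  forall y y', kcomp (fup A B f) (flow A B f) y y' = tstr B y y'.
Definition L_equivalence (A B : Tgraph) (f : tcar A -> tcar B) : Prop :=
  fully_faithful A B f /\ L_dense A B f.

Definition L_injective (X : Tgraph) : Prop :=
  forall (A B : Tgraph), is_Tcat A -> is_Tcat B ->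
  forall i : tcar A -> tcar B, Tfunctor A B i -> L_equivalence A B i ->
  forall h : tcar A -> tcar X, Tfunctor A X h ->
  exists g : tcar B -> tcar X, Tfunctor B X g /\ fiso A X (fun a => g (i a)) h.

Definition Vgraph : Tgraph := Tgr Q (fun (v : T Q) (v' : Q) => qhom (xi v) v').

Definition absT (X : Tgraph) : Tgraph := Tgr (T (tcar X)) (rmap (@mu M (tcar X))).

Definition homV_car (X : Tgraph) : Type :=
  {h : T (tcar X) -> Q | Tfunctor (absT X) Vgraph h}.

Definition ev {X : Tgraph} (p : T (tcar X) * homV_car X) : Q :=
  proj1_sig (snd p) (fst p).

(* |X| -o V with structure [m_X, hom_xi] *)
Definition homV (X : Tgraph) : Tgraph :=
  Tgr (homV_car X) (fun (p : T (homV_car X)) (h : homV_car X) =>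
    qinf (fun v => exists q : T (T (tcar X) * homV_car X),
            fmap snd q = p /\
            v = qhom (xi (fmap (@ev X) q)) (proj1_sig h (mu (fmap fst q))))).

Definition op_r (X : Tgraph) : vrel (T (tcar X)) (T (tcar X)) :=
  fun x y => qsup (fun v => exists XX : T (T (tcar X)), mu XX = x /\ v = Txi (tstr X) XX y).
Definition Xop (X : Tgraph) : Tgraph :=
  Tgr (T (tcar X)) (fun (XX : T (T (tcar X))) (y : T (tcar X)) => Txi (rconv (op_r X)) XX (eta y)).

Definition Xhat (X : Tgraph) : Tgraph :=
  subgraph (homV X) (fun psi => Tfunctor (Xop X) Vgraph (proj1_sig psi)).

(* psi in Xhat viewed as a T-relation X -> E *)
Definition as_module (X : Tgraph) (psi : tcar (Xhat X)) : vrel (T (tcar X)) unit :=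
  fun x _ => proj1_sig (proj1_sig psi) x.

Definition tight (X : Tgraph) (psi : tcar (Xhat X)) : Prop :=
  exists phi : vrel (T unit) (tcar X),
    is_module E X phi /\ adjoint E X phi (as_module X psi).

Definition Xtilde (X : Tgraph) : Tgraph := subgraph (Xhat X) (tight X).

Definition tilde_fun (X : Tgraph) (w : tcar (Xtilde X)) : T (tcar X) -> Q :=
  proj1_sig (proj1_sig (proj1_sig w)).
Definition yoneda (X : Tgraph) (x : tcar X) : T (tcar X) -> Q :=
  fun xx => tstr X xx x.

End Theory.

(* Main.v *)
Require Import Defs.
From Stdlib Require Import FunctionalExtensionality Setoid.

Section S.
Variable Q : quantale.
Variable M : monad.
Variable xi : T M Q -> Q.
Hypothesis HT1 : T_one M.
Hypothesis Hwpb : T_weak_pullbacks M.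
Hypothesis Hmu : mu_weak_pullbacks M.
Hypothesis Hxi : strict_topological_theory Q M xi.

Local Notation TT := (T M).
Local Notation "u ⊑ v" := (@qle Q u v) (at level 70).
Local Notation "u ⊗ v" := (@qtens Q u v) (at level 40, left associativity).
Local Notation kk := (@qk Q).
Local Notation Tx r := (Txi Q M xi r).
Local Notation kc a b := (kcomp Q M xi a b).

Lemma le_refl (u : Q) : u ⊑ u. Proof. apply qle_refl. Qed.
Lemma le_trans (u v w : Q) : u ⊑ v -> v ⊑ w -> u ⊑ w. Proof. apply qle_trans. Qed.
Lemma sup_ub (S : Q -> Prop) u : S u -> u ⊑ qsup S. Proof. apply qsup_ub. Qed.
Lemma sup_least (S : Q -> Prop) w : (forall u, S u -> u ⊑ w) -> qsup S ⊑ w.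
Proof. apply qsup_least. Qed.
Lemma tens_C (u v : Q) : u ⊗ v = v ⊗ u. Proof. apply qtens_comm. Qed.
Lemma tens_A (u v w : Q) : u ⊗ (v ⊗ w) = u ⊗ v ⊗ w. Proof. apply qtens_assoc. Qed.
Lemma tens_kl (u : Q) : kk ⊗ u = u. Proof. apply qtens_unit. Qed.
Lemma tens_kr (u : Q) : u ⊗ kk = u. Proof. rewrite tens_C; apply qtens_unit. Qed.

Lemma tens_mono_r (u v v' : Q) : v ⊑ v' -> u ⊗ v ⊑ u ⊗ v'.
Proof.
  intros H. assert (E: v' = qsup (fun t => t = v \/ t = v')).
  { apply qle_antisym. apply sup_ub; auto.
    apply sup_least; intros t [->| ->]; auto using le_refl. }
  rewrite E, qtens_sup. apply sup_ub. exists v; auto.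
Qed.
Lemma tens_mono_l (u u' v : Q) : u ⊑ u' -> u ⊗ v ⊑ u' ⊗ v.
Proof. intros; rewrite (tens_C u), (tens_C u'); apply tens_mono_r; auto. Qed.
Lemma tens_mono (u u' v v' : Q) : u ⊑ u' -> v ⊑ v' -> u ⊗ v ⊑ u' ⊗ v'.
Proof. intros; eapply le_trans; [apply tens_mono_l; eauto| apply tens_mono_r; auto]. Qed.

Lemma tens_sup_le (u : Q) S w : (forall s, S s -> u ⊗ s ⊑ w) -> u ⊗ qsup S ⊑ w.
Proof. intros H; rewrite qtens_sup; apply sup_least; intros v [s [Hs ->]]; auto. Qed.
Lemma tens_sup_le_l (u : Q) S w : (forall s, S s -> s ⊗ u ⊑ w) -> qsup S ⊗ u ⊑ w.
Proof. intros H; rewrite tens_C; apply tens_sup_le; intros; rewrite tens_C; auto. Qed.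

Lemma hom_intro (z u v : Q) : z ⊗ u ⊑ v -> z ⊑ qhom u v.
Proof. intros; apply sup_ub; auto. Qed.
Lemma hom_elim (z u v : Q) : z ⊑ qhom u v -> z ⊗ u ⊑ v.
Proof. intros H; eapply le_trans; [apply tens_mono_l; eauto|].
  apply tens_sup_le_l; auto. Qed.
Lemma inf_intro (z : Q) S : (forall s, S s -> z ⊑ s) -> z ⊑ qinf S.
Proof. intros; apply sup_ub; auto. Qed.
Lemma inf_lb (S : Q -> Prop) s : S s -> qinf S ⊑ s.
Proof. intros; apply sup_least; intros u Hu; auto. Qed.

Lemma fmap_ext A B (f g : A -> B) (x : TT A) : (forall a, f a = g a) -> fmap f x = fmap g x.
Proof. intros H; apply functional_extensionality in H; subst; auto. Qed.
Lemma fcomp A B C (f : A -> B) (g : B -> C) (x : TT A) :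
  fmap g (fmap f x) = fmap (fun a => g (f a)) x.
Proof. symmetry; apply fmap_comp. Qed.
Lemma fmap_const A B (c : B) (x : TT A) : fmap (fun _ => c) x = eta c.
Proof.
  transitivity (fmap (fun _ : unit => c) (fmap (fun _ => tt) x)).
  { apply (fmap_comp M A unit B (fun _ => tt) (fun _ => c) x). }
  rewrite (HT1 (fmap (fun _ => tt) x) (eta tt)). apply eta_nat.
Qed.
Lemma TTunit_single (W W' : TT (TT unit)) : W = W'.
Proof.
  assert (E : forall V : TT (TT unit), V = eta (eta tt)).
  { intros V. rewrite <- (fmap_id M _ V).
    rewrite (fmap_ext _ _ _ (fun _ => eta tt)); [apply fmap_const|]. intros; apply HT1. }
  rewrite (E W), (E W'); auto.
Qed.
Lemma mu_eta_eta A (W : TT (TT A)) (z : A) : mu W = eta z -> W = eta (eta z).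
Proof.
  intros H. destruct (Hmu unit A (fun _ => z) (eta tt) W) as [V [HV1 HV2]].
  { rewrite eta_nat; auto. }
  rewrite <- HV2, (TTunit_single V (eta (eta tt))), eta_nat, eta_nat; auto.
Qed.
Lemma fiber_eta A B (g : A -> B) (q : TT A) (c : B) :
  fmap g q = eta c -> exists W : TT {a | g a = c}, fmap (@proj1_sig _ _) W = q.
Proof.
  intros H. destruct (Hwpb A unit B g (fun _ => c) q (eta tt)) as [w [H1 H2]].
  { rewrite eta_nat; auto. }
  exists (fmap (fun p => exist (fun a => g a = c) (fst (proj1_sig p)) (proj2_sig p)) w).
  rewrite fcomp; auto.
Qed.
Lemma fmap_eta_fiber A B C (g : A -> B) (q : TT A) (c : B) (h h' : A -> C) :
  fmap g q = eta c -> (forall a, g a = c -> h a = h' a) -> fmap h q = fmap h' q.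
Proof.
  intros H Hh. destruct (fiber_eta _ _ _ _ _ H) as [W <-].
  rewrite !fcomp. apply fmap_ext. intros [a Ha]; simpl; auto.
Qed.

Lemma xi_const A (u : Q) (x : TT A) : xi (fmap (fun _ => u) x) = u.
Proof. rewrite fmap_const; apply (xi_eta _ _ _ Hxi). Qed.
Lemma xi_tens2 A (f g : A -> Q) (x : TT A) :
  xi (fmap (fun a => f a ⊗ g a) x) = xi (fmap f x) ⊗ xi (fmap g x).
Proof.
  pose proof (xi_tens _ _ _ Hxi (fmap (fun a => (f a, g a)) x)) as E.
  rewrite !fcomp in E. simpl in E. exact E.
Qed.
Lemma xi_scal A (u : Q) (g : A -> Q) (x : TT A) :
  xi (fmap (fun a => u ⊗ g a) x) = u ⊗ xi (fmap g x).
Proof. rewrite (xi_tens2 _ (fun _ => u)), xi_const; auto. Qed.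
Lemma xi_mono A (f g : A -> Q) (x : TT A) :
  (forall a, f a ⊑ g a) -> xi (fmap f x) ⊑ xi (fmap g x).
Proof.
  intros H.
  set (s := fun (p : A + A) => match p with inl a => a | inr a => a end).
  set (h := fun (p : A + A) => match p with inl a => f a | inr a => g a end).
  assert (E : forall a, PV Q s h a = g a).
  { intro a. apply qle_antisym.
    - apply sup_least. intros v [p [Hp ->]]. destruct p; simpl in *; subst; [apply H|apply le_refl].
    - apply sup_ub. exists (inr a). auto. }
  assert (E2 : fmap g x = fmap (PV Q s h) x) by (apply fmap_ext; intro; rewrite E; auto).
  rewrite E2, (xi_nat _ _ _ Hxi).
  apply sup_ub. exists (fmap inl x). split.
  - rewrite fcomp; simpl; apply (fmap_id M).
  - rewrite fcomp. reflexivity.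
Qed.
Lemma xi_ge_k A (f : A -> Q) (x : TT A) : (forall a, kk ⊑ f a) -> kk ⊑ xi (fmap f x).
Proof. intros H. eapply le_trans; [|apply (xi_mono _ (fun _ => kk)); eauto].
  rewrite xi_const. apply le_refl. Qed.


Lemma Txi_ub' A B (r : vrel Q A B) (w : TT (A*B)) x y :
  fmap fst w = x -> fmap snd w = y ->
  xi (fmap (fun p => r (fst p) (snd p)) w) ⊑ Tx r x y.
Proof. intros H1 H2. apply sup_ub. exists w; auto. Qed.
Lemma Txi_le A B (r : vrel Q A B) x y u :
  (forall w, fmap fst w = x -> fmap snd w = y ->
     xi (fmap (fun p => r (fst p) (snd p)) w) ⊑ u) -> Tx r x y ⊑ u.
Proof. intros H; apply sup_least; intros v [w [H1 [H2 ->]]]; auto. Qed.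
Lemma Txi_eta A B (r : vrel Q A B) a c : r a c ⊑ Tx r (eta a) (eta c).
Proof.
  eapply le_trans; [|apply (Txi_ub' _ _ r (eta (a,c)))].
  - rewrite eta_nat; simpl; rewrite (xi_eta _ _ _ Hxi); apply le_refl.
  - rewrite eta_nat; auto.
  - rewrite eta_nat; auto.
Qed.
Lemma Txi_mono A B (r s : vrel Q A B) x y :
  (forall a b, r a b ⊑ s a b) -> Tx r x y ⊑ Tx s x y.
Proof.
  intros H. apply Txi_le; intros w H1 H2.
  eapply le_trans; [|apply (Txi_ub' _ _ s w); auto]. apply xi_mono; auto.
Qed.
Lemma Txi_etaL A B (r : vrel Q A B) a y : Tx r (eta a) y = xi (fmap (r a) y).
Proof.
  apply qle_antisym.
  - apply Txi_le; intros w H1 H2.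
    rewrite (fmap_eta_fiber _ _ _ fst w a _ (fun p => r a (snd p))); auto.
    + rewrite <- H2, fcomp. apply le_refl.
    + intros p <-; auto.
  - eapply le_trans; [|apply (Txi_ub' _ _ r (fmap (fun b => (a, b)) y))].
    + rewrite fcomp. apply le_refl.
    + rewrite fcomp; simpl; apply fmap_const.
    + rewrite fcomp; simpl; apply (fmap_id M).
Qed.
Lemma Txi_etaR A B (r : vrel Q A B) x c : Tx r x (eta c) = xi (fmap (fun a => r a c) x).
Proof.
  apply qle_antisym.
  - apply Txi_le; intros w H1 H2.
    rewrite (fmap_eta_fiber _ _ _ snd w c _ (fun p => r (fst p) c)); auto.
    + rewrite <- H1, fcomp. apply le_refl.
    + intros p <-; auto.
  - eapply le_trans; [|apply (Txi_ub' _ _ r (fmap (fun b => (b, c)) x))].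
    + rewrite fcomp. apply le_refl.
    + rewrite fcomp; simpl; apply (fmap_id M).
    + rewrite fcomp; simpl; apply fmap_const.
Qed.
Lemma Txi_map A B A' B' (r : vrel Q A' B') (f : A -> A') (g : B -> B') x y :
  Tx (fun a b => r (f a) (g b)) x y ⊑ Tx r (fmap f x) (fmap g y).
Proof.
  apply Txi_le; intros w H1 H2.
  eapply le_trans; [|apply (Txi_ub' _ _ r (fmap (fun p => (f (fst p), g (snd p))) w))].
  - rewrite fcomp. apply le_refl.
  - rewrite fcomp, <- H1, fcomp; auto.
  - rewrite fcomp, <- H2, fcomp; auto.
Qed.
Lemma Txi_unit A (r : vrel Q A unit) x u : Tx r x u = xi (fmap (fun a => r a tt) x).
Proof.
  apply qle_antisym.
  - apply Txi_le; intros w H1 H2.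
    rewrite <- H1, fcomp. apply xi_mono. intros [a []]; apply le_refl.
  - eapply le_trans; [|apply (Txi_ub' _ _ r (fmap (fun a => (a, tt)) x))].
    + rewrite fcomp. apply le_refl.
    + rewrite fcomp; simpl; apply (fmap_id M).
    + rewrite fcomp; simpl; rewrite fmap_const. apply HT1.
Qed.
Lemma Txi_constL_le A B (g : B -> Q) x y :
  Tx (fun (_ : A) b => g b) x y ⊑ xi (fmap g y).
Proof. apply Txi_le; intros w H1 H2. rewrite <- H2, fcomp. apply le_refl. Qed.
Lemma Txi_constL B (g : B -> Q) (x : TT (TT unit)) y :
  Tx (fun (_ : TT unit) b => g b) x y = xi (fmap g y).
Proof.
  apply qle_antisym; [apply Txi_constL_le|].
  eapply le_trans; [|apply (Txi_ub' _ _ _ (fmap (fun b => (eta tt, b)) y))].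
  - rewrite fcomp. apply le_refl.
  - apply TTunit_single.
  - rewrite fcomp; simpl; apply (fmap_id M).
Qed.
Lemma Txi_constk A B (x : TT A) (y : TT B) : Tx (fun _ _ => kk) x y ⊑ kk.
Proof. apply Txi_le; intros w _ _. rewrite xi_const. apply le_refl. Qed.

Definition sharp {A B} (a : vrel Q (TT A) B) : vrel Q (TT A) (TT B) :=
  rcomp Q (rconv Q (rmap Q (@mu M A))) (Tx a).
Lemma sharp_ub A B (a : vrel Q (TT A) B) X x y : mu X = x -> Tx a X y ⊑ sharp a x y.
Proof.
  intros H.
  eapply le_trans; [|apply sup_ub; exists X; reflexivity].
  eapply le_trans; [rewrite <- (tens_kl (Tx a X y)); apply le_refl|]. apply tens_mono_l.
  apply sup_ub. split; auto.
Qed.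
Lemma sharp_le A B (a : vrel Q (TT A) B) x y u :
  (forall X, mu X = x -> Tx a X y ⊑ u) -> sharp a x y ⊑ u.
Proof.
  intros H. apply sup_least; intros v [X ->]. apply tens_sup_le_l.
  intros s [Hm ->]. rewrite tens_kl; auto.
Qed.
Lemma kc_ub A B C (a : vrel Q (TT A) B) (b : vrel Q (TT B) C) x y z :
  sharp a x y ⊗ b y z ⊑ kc a b x z.
Proof. apply sup_ub. exists y; auto. Qed.
Lemma kc_le A B C (a : vrel Q (TT A) B) (b : vrel Q (TT B) C) x z u :
  (forall y, sharp a x y ⊗ b y z ⊑ u) -> kc a b x z ⊑ u.
Proof. intros H. apply sup_least; intros v [y ->]; apply H. Qed.
Lemma kc_ub2 A B C (a : vrel Q (TT A) B) (b : vrel Q (TT B) C) X x y z :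
  mu X = x -> Tx a X y ⊗ b y z ⊑ kc a b x z.
Proof. intros H. eapply le_trans; [|apply kc_ub]. apply tens_mono_l, sharp_ub; auto. Qed.
Lemma kc_le2 A B C (a : vrel Q (TT A) B) (b : vrel Q (TT B) C) x z u :
  (forall X y, mu X = x -> Tx a X y ⊗ b y z ⊑ u) -> kc a b x z ⊑ u.
Proof.
  intros H. apply kc_le; intros y. apply tens_sup_le_l.
  intros s [X ->]. rewrite <- tens_A. apply tens_sup_le_l. intros t [Hm ->]. rewrite tens_kl; eauto.
Qed.

Local Notation tc G := (tcar Q M G).
Local Notation ts G := (tstr Q M G).
Lemma Tcat_refl G : is_Tcat Q M xi G -> forall x, kk ⊑ ts G (eta x) x.
Proof. intros [H _]; auto. Qed.
Lemma Tcat_trans G : is_Tcat Q M xi G ->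
  forall X y z, Tx (ts G) X y ⊗ ts G y z ⊑ ts G (mu X) z.
Proof. intros [_ H] X y z. eapply le_trans; [|apply H]. apply kc_ub2; auto. Qed.
Lemma Tcat_intro G : (forall x, kk ⊑ ts G (eta x) x) ->
  (forall X y z, Tx (ts G) X y ⊗ ts G y z ⊑ ts G (mu X) z) -> is_Tcat Q M xi G.
Proof.
  intros H1 H2. split; auto. intros x z. apply kc_le2. intros X y <-; auto.
Qed.
Lemma Tcat_trans_eta G : is_Tcat Q M xi G ->
  forall x y z, ts G x y ⊗ ts G (eta y) z ⊑ ts G x z.
Proof.
  intros HG x y z. rewrite <- (mu_eta_l M _ x) at 2.
  eapply le_trans; [|apply Tcat_trans; auto]. apply tens_mono_l, Txi_eta.
Qed.


Local Notation ua r := (fun p => r (fst p) (snd p)).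

Lemma sharp_le_t A B (a : vrel Q (TT A) B) x y s u :
  (forall X, mu X = x -> Tx a X y ⊗ s ⊑ u) -> sharp a x y ⊗ s ⊑ u.
Proof.
  intros H. apply tens_sup_le_l. intros v [X ->]. rewrite <- tens_A.
  apply tens_sup_le_l. intros t [Hm ->]. rewrite tens_kl; auto.
Qed.
Lemma Txi_le_t A B (r : vrel Q A B) x y s u :
  (forall w, fmap fst w = x -> fmap snd w = y ->
     xi (fmap (ua r) w) ⊗ s ⊑ u) -> Tx r x y ⊗ s ⊑ u.
Proof. intros H. apply tens_sup_le_l. intros v [w [H1 [H2 ->]]]; auto. Qed.

Lemma sharp_comp_ge A B C (a : vrel Q (TT A) B) (b : vrel Q (TT B) C) x y z :
  sharp a x y ⊗ sharp b y z ⊑ sharp (kc a b) x z.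
Proof.
  apply sharp_le_t; intros X HX. rewrite tens_C; apply sharp_le_t; intros Y HY. rewrite tens_C.
  apply Txi_le_t; intros w1 H1 H2. rewrite tens_C; apply Txi_le_t; intros w2 H3 H4. rewrite tens_C.
  destruct (Hmu _ _ snd w1 (fmap fst w2)) as [W1 [HW1 HW2]].
  { rewrite H2, H3, HY; auto. }
  destruct (Hwpb _ _ _ (fmap snd) fst W1 w2 HW2) as [Om [HO1 HO2]].
  set (w := fmap (fun o => (mu (fmap fst (fst (proj1_sig o))), snd (snd (proj1_sig o)))) Om).
  eapply le_trans; [|apply (sharp_ub _ _ _ (fmap fst w))].
  2: { transitivity (mu (fmap mu (fmap (fmap fst) W1))).
       { f_equal. unfold w. rewrite <- HO1, !fcomp. reflexivity. }
       rewrite <- mu_assoc, <- mu_nat, HW1, H1; auto. }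
  eapply le_trans; [|apply (Txi_ub' _ _ _ w); auto].
  2: { unfold w. rewrite fcomp; simpl. rewrite <- H4, <- HO2, fcomp. reflexivity. }
  assert (E1 : xi (fmap (ua a) w1) = xi (fmap (fun o => xi (fmap (ua a) (fst (proj1_sig o)))) Om)).
  { rewrite <- HW1, mu_nat, <- (xi_mu _ _ _ Hxi), fcomp, <- HO1, fcomp. reflexivity. }
  assert (E2 : xi (fmap (ua b) w2) = xi (fmap (fun o => ua b (snd (proj1_sig o))) Om)).
  { rewrite <- HO2, fcomp. reflexivity. }
  rewrite E1, E2, <- xi_tens2. unfold w. rewrite fcomp. apply xi_mono.
  intros [[rho [y' c]] Hr]; simpl in *.
  eapply le_trans; [|apply (kc_ub2 _ _ _ a b (fmap fst rho)); reflexivity].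
  apply tens_mono_l. apply Txi_ub'; auto.
Qed.

Lemma sharp_comp_le A B C (a : vrel Q (TT A) B) (b : vrel Q (TT B) C) x z :
  sharp (kc a b) x z ⊑ qsup (fun v => exists y, v = sharp a x y ⊗ sharp b y z).
Proof.
  apply sharp_le; intros X HX. apply Txi_le; intros w H1 H2.
  pose (I := {r : (TT A * C) * TT (TT A * B) | mu (fmap fst (snd r)) = fst (fst r)}).
  pose (f := fun r : I => fst (proj1_sig r)).
  pose (chi := fun r : I => xi (fmap (ua a) (snd (proj1_sig r))) ⊗
                 b (fmap snd (snd (proj1_sig r))) (snd (fst (proj1_sig r)))).
  assert (E : forall p, kc a b (fst p) (snd p) = PV Q f chi p).
  { intros [x' c]; simpl. apply qle_antisym.
    - apply kc_le2; intros X' y' HX'. apply Txi_le_t; intros w' H1' H2'.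
      assert (P : mu (fmap fst w') = x') by (rewrite H1'; auto).
      apply sup_ub. exists (exist _ ((x', c), w') P : I). split; [reflexivity|].
      unfold chi; simpl. rewrite H2'. reflexivity.
    - apply sup_least; intros v [[[p0 w'] Hr] [Hf ->]]. unfold f in Hf; simpl in Hf; subst p0.
      unfold chi; simpl in *.
      eapply le_trans; [|apply (kc_ub2 _ _ _ a b (fmap fst w')); exact Hr].
      apply tens_mono_l. apply Txi_ub'; auto. }
  rewrite (fmap_ext _ _ _ _ w E), (xi_nat _ _ _ Hxi).
  apply sup_least; intros v [Om [HOm ->]].
  pose (g := fun r : I => snd (proj1_sig r)).
  pose (W := mu (fmap g Om)).
  eapply le_trans; [|apply sup_ub; exists (fmap snd W); reflexivity].
  unfold chi. rewrite xi_tens2. apply tens_mono.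
  - assert (E1 : xi (fmap (fun r : I => xi (fmap (ua a) (snd (proj1_sig r)))) Om)
                 = xi (fmap (ua a) W)).
    { unfold W. rewrite mu_nat, <- (xi_mu _ _ _ Hxi), !fcomp. reflexivity. }
    rewrite E1. apply (le_trans _ (Tx a (fmap fst W) (fmap snd W))); [apply Txi_ub'; auto|].
    apply sharp_ub.
    unfold W. rewrite mu_nat, mu_assoc, fcomp, fcomp.
    transitivity (mu (fmap (fun r : I => fst (fst (proj1_sig r))) Om)).
    + f_equal. apply fmap_ext. intros [r Hr]; simpl; auto.
    + rewrite <- (fcomp _ _ _ f fst), HOm, H1; auto.
  - eapply le_trans; [|apply (sharp_ub _ _ _ (fmap (fun r : I => fmap snd (g r)) Om))].
    + eapply le_trans; [|apply (Txi_ub' _ _ _ (fmap (fun r : I => (fmap snd (g r), snd (fst (proj1_sig r)))) Om))].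
      * rewrite fcomp. apply le_refl.
      * rewrite fcomp. reflexivity.
      * rewrite fcomp; simpl. rewrite <- H2, <- HOm, fcomp. reflexivity.
    + unfold W. rewrite mu_nat, fcomp. reflexivity.
Qed.

Lemma kc_assoc A B C D (a : vrel Q (TT A) B) (b : vrel Q (TT B) C) (c : vrel Q (TT C) D) x u :
  kc (kc a b) c x u = kc a (kc b c) x u.
Proof.
  apply qle_antisym.
  - apply kc_le; intros zz. eapply le_trans; [apply tens_mono_l, sharp_comp_le|].
    apply tens_sup_le_l; intros v [y ->]. rewrite <- tens_A.
    eapply le_trans; [|apply (kc_ub _ _ _ a (kc b c) x y)]. apply tens_mono_r, kc_ub.
  - apply kc_le; intros y. apply tens_sup_le; intros s [zz ->]. rewrite tens_A.
    eapply le_trans; [|apply kc_ub]. apply tens_mono_l, sharp_comp_ge.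
Qed.


Lemma Txi_mapL A B A' (r : vrel Q A' B) (f : A -> A') x y :
  Tx (fun a b => r (f a) b) x y ⊑ Tx r (fmap f x) y.
Proof.
  eapply le_trans; [apply (Txi_map _ _ _ _ r f (fun b => b))|]. rewrite (fmap_id M). apply le_refl.
Qed.
Lemma Txi_mapR A B B' (r : vrel Q A B') (g : B -> B') x y :
  Tx (fun a b => r a (g b)) x y ⊑ Tx r x (fmap g y).
Proof.
  eapply le_trans; [apply (Txi_map _ _ _ _ r (fun a => a) g)|]. rewrite (fmap_id M). apply le_refl.
Qed.
Lemma Txi_diag A (g : A -> Q) (r : vrel Q (TT A) A) x :
  (forall a, g a ⊑ r (eta a) a) -> xi (fmap g x) ⊑ Tx r (fmap eta x) x.
Proof.
  intros H. eapply le_trans; [|apply (Txi_ub' _ _ r (fmap (fun a => (eta a, a)) x))].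
  - rewrite fcomp. apply xi_mono; auto.
  - rewrite fcomp; auto.
  - rewrite fcomp; simpl; apply (fmap_id M).
Qed.

Lemma kc_mono_l A B C (a a' : vrel Q (TT A) B) (b : vrel Q (TT B) C) x z :
  (forall x y, a x y ⊑ a' x y) -> kc a b x z ⊑ kc a' b x z.
Proof.
  intros H. apply kc_le2; intros X y HX. eapply le_trans; [|apply kc_ub2; eauto].
  apply tens_mono_l, Txi_mono; auto.
Qed.
Lemma kc_mono_r A B C (a : vrel Q (TT A) B) (b b' : vrel Q (TT B) C) x z :
  (forall x y, b x y ⊑ b' x y) -> kc a b x z ⊑ kc a b' x z.
Proof.
  intros H. apply kc_le; intros y. eapply le_trans; [|apply kc_ub].
  apply tens_mono_r; auto.
Qed.

Local Notation fu G H f := (fup Q M G H f).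
Local Notation fl G H f := (flow Q M G H f).

Lemma kc_refl_l G B (p : vrel Q (TT (tc G)) B) x y :
  is_Tcat Q M xi G -> p x y ⊑ kc (ts G) p x y.
Proof.
  intros HG. eapply le_trans; [|apply (kc_ub2 _ _ _ _ _ (fmap eta x) x); apply (mu_eta_r M)].
  rewrite <- (tens_kl (p x y)) at 1. apply tens_mono_l.
  eapply le_trans; [|apply Txi_diag]. rewrite xi_const; apply le_refl.
  intros; apply Tcat_refl; auto.
Qed.
Lemma kc_refl_r A H (p : vrel Q (TT A) (tc H)) x y :
  is_Tcat Q M xi H -> p x y ⊑ kc p (ts H) x y.
Proof.
  intros HH. eapply le_trans; [|apply (kc_ub2 _ _ _ _ _ (eta x) x (eta y)); apply (mu_eta_l M)].
  rewrite <- (tens_kr (p x y)) at 1. apply tens_mono; [apply Txi_eta|apply Tcat_refl; auto].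
Qed.

Lemma flow_module G H f : is_Tcat Q M xi G -> is_Tcat Q M xi H -> Tfunctor Q M G H f ->
  is_module Q M xi G H (fl G H f).
Proof.
  intros HG HH Hf. split; intros x z.
  - apply kc_le2; intros X y <-. unfold flow.
    rewrite mu_nat.
    eapply le_trans; [|apply Tcat_trans; auto]. apply tens_mono_l.
    eapply le_trans; [|apply Txi_map]. apply Txi_mono. apply Hf.
  - apply kc_le2; intros X y <-. unfold flow.
    rewrite mu_nat.
    eapply le_trans; [|apply Tcat_trans; auto]. apply tens_mono_l.
    apply (Txi_mapL _ _ _ (ts H)).
Qed.
Lemma fup_module G H f : is_Tcat Q M xi G -> is_Tcat Q M xi H -> Tfunctor Q M G H f ->
  is_module Q M xi H G (fu G H f).
Proof.
  intros HG HH Hf. split; intros x z.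
  - apply kc_le2; intros X y <-. unfold fup. apply Tcat_trans; auto.
  - apply kc_le2; intros X y <-. unfold fup.
    eapply le_trans; [|apply Tcat_trans; auto]. apply tens_mono.
    + apply (Txi_mapR _ _ _ (ts H)).
    + apply Hf.
Qed.
Lemma unit_flow_fup G H f x z : is_Tcat Q M xi H -> Tfunctor Q M G H f ->
  ts G x z ⊑ kc (fl G H f) (fu G H f) x z.
Proof.
  intros HH Hf. eapply le_trans; [|apply (kc_ub2 _ _ _ _ _ (fmap eta x) x (fmap f x)); apply (mu_eta_r M)].
  rewrite <- (tens_kl (ts G x z)) at 1. apply tens_mono; [|apply Hf].
  eapply le_trans; [|apply (Txi_ub' _ _ _ (fmap (fun a => (eta a, f a)) x))].
  - rewrite fcomp. apply xi_ge_k. intros a. unfold flow; simpl. rewrite eta_nat. apply Tcat_refl; auto.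
  - rewrite fcomp; auto.
  - rewrite fcomp; auto.
Qed.
Lemma counit_fup_flow G H f y y' : is_Tcat Q M xi H ->
  kc (fu G H f) (fl G H f) y y' ⊑ ts H y y'.
Proof.
  intros HH. apply kc_le2; intros Y a <-. unfold flow, fup.
  eapply le_trans; [|apply Tcat_trans; auto]. apply tens_mono_l.
  apply (Txi_mapR _ _ _ (ts H)).
Qed.
Lemma kc_flow G H f C (p : vrel Q (TT (tc H)) C) x c :
  is_Tcat Q M xi H -> (forall y c, kc (ts H) p y c ⊑ p y c) ->
  kc (fl G H f) p x c = p (fmap f x) c.
Proof.
  intros HH Hp. apply qle_antisym.
  - apply kc_le2; intros X y <-. rewrite mu_nat.
    eapply le_trans; [|apply Hp]. eapply le_trans; [|apply kc_ub2; reflexivity].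
    apply tens_mono_l. unfold flow. apply (Txi_mapL _ _ _ (ts H)).
  - eapply le_trans; [|apply (kc_ub2 _ _ _ _ _ (fmap eta x) x (fmap f x)); apply (mu_eta_r M)].
    rewrite <- (tens_kl (p _ c)) at 1. apply tens_mono_l.
    eapply le_trans; [|apply (Txi_ub' _ _ _ (fmap (fun a => (eta a, f a)) x))].
    + rewrite fcomp. apply xi_ge_k. intros a. unfold flow; simpl. rewrite eta_nat. apply Tcat_refl; auto.
    + rewrite fcomp; auto.
    + rewrite fcomp; auto.
Qed.

Lemma module_unit_r G H (p : vrel Q (TT (tc G)) (tc H)) x y :
  is_Tcat Q M xi H -> is_module Q M xi G H p -> kc p (ts H) x y = p x y.
Proof. intros HH [_ Hp]. apply qle_antisym; [apply Hp|apply kc_refl_r; auto]. Qed.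
Lemma module_unit_l G H (p : vrel Q (TT (tc G)) (tc H)) x y :
  is_Tcat Q M xi G -> is_module Q M xi G H p -> kc (ts G) p x y = p x y.
Proof. intros HG [Hp _]. apply qle_antisym; [apply Hp|apply kc_refl_l; auto]. Qed.

Theorem complete_injective X : is_Tcat Q M xi X -> L_complete Q M xi X -> L_injective Q M xi X.
Proof.
  intros HX HC A B HA HB i Hi [Hff Hd] h Hh.
  pose proof (flow_module _ _ _ HA HB Hi) as Mfi.
  pose proof (fup_module _ _ _ HA HB Hi) as Mui.
  pose proof (flow_module _ _ _ HA HX Hh) as Mfh.
  pose proof (fup_module _ _ _ HA HX Hh) as Muh.
  pose (phi := kc (fu A B i) (fl A X h)).
  pose (psi := kc (fu A X h) (fl A B i)).
  destruct (HC B HB phi psi) as [f [Hf [Hphi Hpsi]]].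
  - split; intros x y; unfold phi.
    + rewrite <- kc_assoc. apply kc_mono_l. intros; apply Mui.
    + rewrite kc_assoc. apply kc_mono_r. intros; apply Mfh.
  - split; intros x y; unfold psi.
    + rewrite <- kc_assoc. apply kc_mono_l. intros; apply Muh.
    + rewrite kc_assoc. apply kc_mono_r. intros; apply Mfi.
  - split; intros x y; unfold phi, psi.
    + rewrite <- Hd. rewrite kc_assoc. apply kc_mono_r. intros x' y'.
      rewrite <- kc_assoc.
      eapply le_trans; [apply kc_refl_l; auto|]. apply kc_mono_l.
      intros; apply unit_flow_fup; auto.
    + rewrite kc_assoc. eapply le_trans; [|apply (counit_fup_flow A X h); auto].
      apply kc_mono_r. intros x' y'. rewrite <- kc_assoc.
      eapply le_trans; [|apply (proj1 Mfh)]. apply kc_mono_l. intros a a'.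
      rewrite kc_flow; auto.
      * unfold fup. rewrite (Hff a a'). apply le_refl.
      * intros; apply Mui.
  - exists f. split; auto.
    assert (K : forall y a, ts X y (f (i a)) = ts X y (h a)).
    { intros y a. transitivity (psi y (i a)); [rewrite Hpsi; reflexivity|].
      unfold psi. transitivity (kc (fu A X h) (ts A) y a).
      - apply qle_antisym.
        + apply kc_le; intros y'. unfold flow. rewrite <- (Hff y' a). apply kc_ub.
        + apply kc_le; intros y'. rewrite (Hff y' a). apply (kc_ub _ _ _ _ (fl A B i)).
      - apply module_unit_r; auto. }
    split; intros y a; simpl; unfold fup; rewrite K; apply le_refl.
Qed.


Lemma subgraph_Tcat G (P : tc G -> Prop) : is_Tcat Q M xi G -> is_Tcat Q M xi (subgraph Q M G P).
Proof.
  intros HG. apply Tcat_intro.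
  - intros x; simpl. rewrite eta_nat. apply Tcat_refl; auto.
  - intros X y z; simpl. rewrite mu_nat.
    eapply le_trans; [|apply Tcat_trans; auto]. apply tens_mono_l.
    apply (Txi_map _ _ _ _ (ts G)).
Qed.

Section YX.
Variable X : Tgraph Q M.
Hypothesis HX : is_Tcat Q M xi X.
Local Notation C := (homV_car Q M xi X).
Local Notation H := (ts (homV Q M xi X)).
Local Notation ev := (@ev Q M xi X).
Local Notation Xt := (Xtilde Q M xi X).
Local Notation b := (ts X).

Lemma hcar_fun (h : C) XX : xi (fmap (proj1_sig h) XX) ⊑ proj1_sig h (mu XX).
Proof.
  destruct h as [h Hh]; simpl. pose proof (Hh XX (mu XX)) as E. simpl in E.
  rewrite <- (tens_kl (xi _)). apply hom_elim. eapply le_trans; [|exact E].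
  apply sup_ub. split; auto.
Qed.
Lemma absT_intro (g : TT (tc X) -> Q) :
  (forall XX, xi (fmap g XX) ⊑ g (mu XX)) -> Tfunctor Q M (absT Q M X) (Vgraph Q M xi) g.
Proof.
  intros H0 XX x. simpl. apply sup_least. intros v [<- ->].
  apply hom_intro. rewrite tens_kl; auto.
Qed.
Lemma H_le p (h : C) q : fmap snd q = p ->
  H p h ⊗ xi (fmap ev q) ⊑ proj1_sig h (mu (fmap fst q)).
Proof. intros Hq. apply hom_elim. apply inf_lb. exists q; auto. Qed.
Lemma H_ge p (h : C) u :
  (forall q, fmap snd q = p -> u ⊗ xi (fmap ev q) ⊑ proj1_sig h (mu (fmap fst q))) ->
  u ⊑ H p h.
Proof. intros H0. apply inf_intro. intros s [q [Hq ->]]. apply hom_intro; auto. Qed.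

Lemma H_refl h : kk ⊑ H (eta h) h.
Proof.
  apply H_ge; intros q Hq. rewrite tens_kl.
  rewrite (fmap_eta_fiber _ _ _ snd q h ev (fun p => proj1_sig h (fst p))); auto.
  - rewrite <- fcomp. apply hcar_fun.
  - intros [a c] E; simpl in *; subst; auto.
Qed.
Lemma H_trans PP p h : Tx H PP p ⊗ H p h ⊑ H (mu PP) h.
Proof.
  apply Txi_le_t; intros w Hw1 Hw2. apply H_ge; intros q Hq.
  destruct (Hmu _ _ snd q PP Hq) as [Q' [HQ1 HQ2]].
  rewrite <- Hw1 in HQ2.
  destruct (Hwpb _ _ _ (fmap snd) fst Q' w HQ2) as [Om [HO1 HO2]].
  pose (q2 := fmap (fun o => (mu (fmap fst (fst (proj1_sig o))), snd (snd (proj1_sig o)))) Om).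
  assert (E1 : fmap snd q2 = p).
  { unfold q2. rewrite fcomp; simpl. rewrite <- Hw2, <- HO2, fcomp. reflexivity. }
  assert (E2 : mu (fmap fst q2) = mu (fmap fst q)).
  { transitivity (mu (fmap mu (fmap (fmap fst) Q'))).
    { f_equal. unfold q2. rewrite <- HO1, !fcomp. reflexivity. }
    rewrite <- mu_assoc, <- mu_nat, HQ1; auto. }
  assert (E3 : xi (fmap (ua H) w) ⊗ xi (fmap ev q) ⊑ xi (fmap ev q2)).
  { assert (F1 : xi (fmap ev q) = xi (fmap (fun o => xi (fmap ev (fst (proj1_sig o)))) Om)).
    { rewrite <- HQ1, mu_nat, <- (xi_mu _ _ _ Hxi), fcomp, <- HO1, fcomp. reflexivity. }
    assert (F2 : xi (fmap (ua H) w) = xi (fmap (fun o => ua H (snd (proj1_sig o))) Om)).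
    { rewrite <- HO2, fcomp. reflexivity. }
    rewrite F1, F2, <- xi_tens2. unfold q2. rewrite fcomp. apply xi_mono.
    intros [[rho [pc c]] Hr]; simpl in *. apply H_le; auto. }
  rewrite <- E2. eapply le_trans; [|apply (H_le p h q2 E1)].
  rewrite <- tens_A, (tens_C (xi _)), <- tens_A. apply tens_mono_r.
  rewrite tens_C. exact E3.
Qed.
Lemma homV_Tcat : is_Tcat Q M xi (homV Q M xi X).
Proof. apply Tcat_intro; [apply H_refl|apply H_trans]. Qed.
Lemma Xt_Tcat : is_Tcat Q M xi Xt.
Proof. apply subgraph_Tcat, subgraph_Tcat, homV_Tcat. Qed.

Lemma Xop_intro (g : TT (tc X) -> Q) :
  (forall BB a, Tx b BB a ⊗ g a ⊑ g (mu BB)) -> Tfunctor Q M (Xop Q M xi X) (Vgraph Q M xi) g.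
Proof.
  intros H0 XX y. simpl. rewrite Txi_etaR. apply hom_intro.
  rewrite <- xi_tens2. eapply le_trans; [apply (xi_mono _ _ (fun _ => g y))|].
  - intros a. unfold rconv, op_r. apply tens_sup_le_l. intros v [BB [<- ->]]. auto.
  - rewrite xi_const. apply le_refl.
Qed.
Lemma Xop_elim (g : TT (tc X) -> Q) : Tfunctor Q M (Xop Q M xi X) (Vgraph Q M xi) g ->
  forall BB a, Tx b BB a ⊗ g a ⊑ g (mu BB).
Proof.
  intros Hg BB a. pose proof (Hg (eta a) (mu BB)) as E. simpl in E.
  rewrite eta_nat, (xi_eta _ _ _ Hxi) in E. apply hom_elim. eapply le_trans; [|exact E].
  eapply le_trans; [|apply Txi_eta]. unfold rconv, op_r. apply sup_ub. exists BB; auto.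
Qed.

Lemma tight_intro (psi : tc (Xhat Q M xi X)) (phi0 : tc X -> Q) :
  (forall xx x, xi (fmap phi0 xx) ⊗ b xx x ⊑ phi0 x) ->
  (kk ⊑ qsup (fun v => exists xx, v = xi (fmap phi0 xx) ⊗ proj1_sig (proj1_sig psi) xx)) ->
  (forall xx x, proj1_sig (proj1_sig psi) xx ⊗ phi0 x ⊑ b xx x) ->
  tight Q M xi X psi.
Proof.
  intros H1 H2 H3. exists (fun _ x => phi0 x). split; [split|split]; intros u x.
  - apply kc_le2; intros XX y _. simpl.
    eapply le_trans; [apply tens_mono_l, Txi_constk|]. rewrite tens_kl; apply le_refl.
  - apply kc_le2; intros XX y _. eapply le_trans; [|apply (H1 y)].
    apply tens_mono_l. apply Txi_constL_le.
  - simpl. eapply le_trans; [apply H2|]. apply sup_least; intros v [xx ->].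
    eapply le_trans; [|apply (kc_ub2 _ _ _ _ _ (eta u) u xx); apply (mu_eta_l M)].
    rewrite Txi_constL. apply le_refl.
  - apply kc_le2; intros XX uu <-. unfold as_module. rewrite Txi_unit.
    eapply le_trans; [|apply H3]. apply tens_mono_l. apply hcar_fun.
Qed.
Lemma tight_elim (psi : tc (Xhat Q M xi X)) : tight Q M xi X psi ->
  exists phi0 : tc X -> Q,
  (kk ⊑ qsup (fun v => exists xx, v = xi (fmap phi0 xx) ⊗ proj1_sig (proj1_sig psi) xx)) /\
  (forall xx x, proj1_sig (proj1_sig psi) xx ⊗ phi0 x ⊑ b xx x).
Proof.
  intros [phi [Hm [Hu Hc]]]. exists (phi (eta tt)). split.
  - eapply le_trans; [apply (Hu (eta tt) tt)|]. apply kc_le; intros xx.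
    eapply le_trans; [|apply sup_ub; exists xx; reflexivity]. apply tens_mono_l.
    apply sharp_le; intros XX _. rewrite (TTunit_single XX (eta (eta tt))), Txi_etaL.
    apply le_refl.
  - intros xx x. eapply le_trans; [|apply Hc].
    eapply le_trans; [|apply (kc_ub2 _ _ _ _ _ (eta xx) xx (eta tt)); apply (mu_eta_l M)].
    apply tens_mono_l. apply (Txi_eta _ _ (as_module Q M xi X psi)).
Qed.

Definition yfun (x : tc X) : TT (tc X) -> Q := fun yy => b yy x.
Lemma yP1 x : Tfunctor Q M (absT Q M X) (Vgraph Q M xi) (yfun x).
Proof.
  apply absT_intro; intros XX. unfold yfun. rewrite <- Txi_etaR.
  eapply le_trans; [|apply Tcat_trans; auto]. rewrite <- (tens_kr (Tx b XX (eta x))) at 1.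
  apply tens_mono_r. apply Tcat_refl; auto.
Qed.
Definition ycar (x : tc X) : C := exist _ (yfun x) (yP1 x).
Lemma yP2 x : Tfunctor Q M (Xop Q M xi X) (Vgraph Q M xi) (proj1_sig (ycar x)).
Proof. apply Xop_intro. intros; apply Tcat_trans; auto. Qed.
Definition yhat (x : tc X) : tc (Xhat Q M xi X) := exist _ (ycar x) (yP2 x).
Lemma yP3 x : tight Q M xi X (yhat x).
Proof.
  apply (tight_intro _ (fun x' => b (eta x) x')); simpl; unfold yfun.
  - intros xx x'. rewrite <- Txi_etaL. eapply le_trans; [apply Tcat_trans; auto|].
    rewrite (mu_eta_l M). apply le_refl.
  - eapply le_trans; [|apply sup_ub; exists (eta x); reflexivity].
    rewrite eta_nat, (xi_eta _ _ _ Hxi). rewrite <- (tens_kl kk) at 1.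
    apply tens_mono; apply Tcat_refl; auto.
  - intros; apply Tcat_trans_eta; auto.
Qed.
Definition yt (x : tc X) : tc Xt := exist _ (yhat x) (yP3 x).

Lemma YH (g : tc X -> C) (Hg : forall x yy, proj1_sig (g x) yy = b yy x) (psi : C)
  (Hpsi : forall BB a, Tx b BB a ⊗ proj1_sig psi a ⊑ proj1_sig psi (mu BB)) xx :
  proj1_sig psi xx = H (fmap g xx) psi.
Proof.
  apply qle_antisym.
  - apply H_ge; intros q Hq.
    destruct (Hwpb _ _ _ snd g q xx Hq) as [W [HW1 HW2]].
    assert (E : xi (fmap ev q) ⊑ Tx b (fmap fst q) xx).
    { eapply le_trans; [|apply (Txi_ub' _ _ b (fmap (fun o => (fst (fst (proj1_sig o)), snd (proj1_sig o))) W))].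
      - rewrite <- HW1, !fcomp.
        apply xi_mono. intros [[[a c] x] Ho]; simpl in *. unfold Defs.ev; simpl.
        rewrite Ho, Hg. apply le_refl.
      - rewrite <- HW1, !fcomp. reflexivity.
      - rewrite <- HW2, !fcomp. reflexivity. }
    rewrite tens_C. eapply le_trans; [|apply Hpsi]. apply tens_mono_l; exact E.
  - pose (q := fmap (fun x => ((eta x : TT (tc X)), g x)) xx).
    assert (E1 : mu (fmap fst q) = xx).
    { unfold q. rewrite fcomp. apply (mu_eta_r M). }
    rewrite <- E1 at 2. eapply le_trans; [|apply H_le].
    2: { unfold q; rewrite fcomp; reflexivity. }
    rewrite <- (tens_kr (H _ psi)) at 1. apply tens_mono_r.
    unfold q. rewrite fcomp. apply xi_ge_k. intros a; simpl. unfold Defs.ev; simpl.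
    rewrite Hg. apply Tcat_refl; auto.
Qed.


Local Notation pp w := (proj1_sig (proj1_sig w)).

Lemma tsXt p (w : tc Xt) : ts Xt p w = H (fmap (fun w : tc Xt => pp w) p) (pp w).
Proof. simpl. rewrite fcomp. reflexivity. Qed.
Lemma wmod (w : tc Xt) : forall BB a, Tx b BB a ⊗ proj1_sig (pp w) a ⊑ proj1_sig (pp w) (mu BB).
Proof. apply Xop_elim. exact (proj2_sig (proj1_sig w)). Qed.
Lemma flow_yt xx (w : tc Xt) : ts Xt (fmap yt xx) w = proj1_sig (pp w) xx.
Proof.
  rewrite tsXt, fcomp. symmetry.
  apply (YH ycar (fun x yy => eq_refl) (pp w) (wmod w)).
Qed.
Lemma claimC (psi : C) (phi0 : tc X -> Q) (Hc : forall xx x, proj1_sig psi xx ⊗ phi0 x ⊑ b xx x)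
  (g : tc X -> C) (Hg : forall x yy, proj1_sig (g x) yy = b yy x) x :
  phi0 x ⊑ H (eta psi) (g x).
Proof.
  apply H_ge; intros q Hq. rewrite Hg.
  rewrite (fmap_eta_fiber _ _ _ snd q psi ev (fun p => proj1_sig psi (fst p))); auto.
  - rewrite <- fcomp. rewrite tens_C. eapply le_trans; [|apply Hc]. apply tens_mono_l, hcar_fun.
  - intros [a c] E; simpl in *; subst; reflexivity.
Qed.

Definition prop_iii : Prop :=
  exists R : tcar Q M Xt -> tcar Q M X,
       Tfunctor Q M Xt X R /\
       exists yt : tcar Q M X -> tcar Q M Xt,
         (forall x xx, tilde_fun Q M xi X (yt x) xx = yoneda Q M X x xx) /\
         fiso Q M X X (fun x => R (yt x)) (fun x => x).

Theorem injective_iii : L_injective Q M xi X -> prop_iii.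
Proof.
  intros HI.
  assert (Hff : fully_faithful Q M X Xt yt).
  { intros xx x. rewrite flow_yt. reflexivity. }
  assert (Hyt : Tfunctor Q M X Xt yt).
  { intros xx x. rewrite (Hff xx x). apply le_refl. }
  assert (Hid : Tfunctor Q M X X (fun x => x)).
  { intros xx x. rewrite (fmap_id M). apply le_refl. }
  assert (Hd : L_dense Q M xi X Xt yt).
  { intros p w. apply qle_antisym.
    - apply kc_le2; intros PP xx <-. unfold flow at 1. rewrite flow_yt.
      rewrite (YH ycar (fun x yy => eq_refl) (pp w) (wmod w)).
      rewrite tsXt, mu_nat. eapply le_trans; [|apply H_trans]. apply tens_mono_l.
      eapply le_trans; [|apply (Txi_map _ _ _ _ H)]. apply Txi_mono. intros a c.
      unfold fup. rewrite tsXt. apply le_refl.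
    - destruct (tight_elim _ (proj2_sig w)) as [phi0 [Hu Hc]].
      rewrite tsXt. set (Hp := H _ _).
      rewrite <- (tens_kr Hp). eapply le_trans; [apply tens_mono_r; exact Hu|].
      apply tens_sup_le; intros s [xx ->]. rewrite tens_A.
      eapply le_trans; [|apply (kc_ub _ _ _ _ (flow Q M X Xt yt) p xx w)]. apply tens_mono.
      + eapply le_trans; [|apply (sharp_ub _ _ _ (eta p)); apply (mu_eta_l M)].
        rewrite Txi_etaL. rewrite <- xi_scal. apply xi_mono. intros x. unfold fup.
        rewrite (tsXt p (yt x)).
        eapply le_trans; [|apply (Tcat_trans_eta _ homV_Tcat _ (pp w))]. apply tens_mono_r.
        apply (claimC (pp w) phi0 Hc ycar (fun _ _ => eq_refl)).
      + unfold flow. rewrite flow_yt. apply le_refl. }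
  destruct (HI X Xt HX Xt_Tcat yt Hyt (conj Hff Hd) (fun x => x) Hid) as [g [Hg Hiso]].
  exists g. split; auto. exists yt. split; [intros; reflexivity | exact Hiso].
Qed.

Lemma isomap (f : tc X -> tc X) : (forall yy x, b yy (f x) = b yy x) ->
  forall xx y, b (fmap f xx) y = b xx y.
Proof.
  intros Hf xx y. apply qle_antisym.
  - rewrite <- (mu_eta_r M _ xx) at 2. eapply le_trans; [|apply Tcat_trans; auto].
    rewrite <- (tens_kl (b _ y)) at 1. apply tens_mono_l.
    eapply le_trans; [|apply (Txi_ub' _ _ b (fmap (fun a => (eta a, f a)) xx))].
    + rewrite fcomp. apply xi_ge_k. intros a; simpl. rewrite Hf. apply Tcat_refl; auto.
    + rewrite fcomp; auto.
    + rewrite fcomp; auto.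
  - assert (E : mu (fmap (fun a => eta (f a)) xx) = fmap f xx).
    { rewrite <- fcomp. apply (mu_eta_r M). }
    rewrite <- E. eapply le_trans; [|apply Tcat_trans; auto].
    rewrite <- (tens_kl (b xx y)) at 1. apply tens_mono_l.
    eapply le_trans; [|apply (Txi_ub' _ _ b (fmap (fun a => (eta (f a), a)) xx))].
    + rewrite fcomp. apply xi_ge_k. intros a; simpl. rewrite <- Hf. apply Tcat_refl; auto.
    + rewrite fcomp; auto.
    + rewrite fcomp; simpl; apply (fmap_id M).
Qed.

Theorem iii_complete : prop_iii -> L_complete Q M xi X.
Proof.
  intros [R [HR [y' [Hy [Hi1 Hi2]]]]] Z HZ phi psi Hphi Hpsi [Hunit Hcounit].
  pose (gy := fun x => pp (y' x)).
  assert (Hgy : forall x yy, proj1_sig (gy x) yy = b yy x) by (intros; apply Hy).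
  assert (Hiso : forall yy x, b yy (R (y' x)) = b yy x).
  { intros yy x. apply qle_antisym; [apply Hi1|apply Hi2]. }
  assert (Hm1 : forall z XX, xi (fmap (fun xx => psi xx z) XX) ⊑ psi (mu XX) z).
  { intros z XX. rewrite <- Txi_etaR. rewrite <- (tens_kr (Tx psi XX (eta z))).
    eapply le_trans; [|apply (proj2 Hpsi)]. eapply le_trans; [|apply kc_ub2; reflexivity].
    apply tens_mono_r. apply Tcat_refl; auto. }
  assert (Hm2 : forall z BB a, Tx b BB a ⊗ psi a z ⊑ psi (mu BB) z).
  { intros z BB a. eapply le_trans; [|apply (proj1 Hpsi)]. apply kc_ub2; reflexivity. }
  assert (Hu : forall z, kk ⊑ qsup (fun v => exists xx, v = xi (fmap (phi (eta z)) xx) ⊗ psi xx z)).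
  { intros z. eapply le_trans; [apply (Tcat_refl _ HZ z)|]. eapply le_trans; [apply Hunit|].
    apply kc_le2; intros XX y HXX. apply mu_eta_eta in HXX. subst XX.
    rewrite Txi_etaL. apply sup_ub. exists y; reflexivity. }
  assert (Hc : forall z xx x, psi xx z ⊗ phi (eta z) x ⊑ b xx x).
  { intros z xx x. eapply le_trans; [|apply Hcounit].
    eapply le_trans; [|apply (kc_ub2 _ _ _ _ _ (eta xx) xx (eta z)); apply (mu_eta_l M)].
    apply tens_mono_l, Txi_eta. }
  pose (c1 := fun z => exist _ (fun xx => psi xx z) (absT_intro _ (Hm1 z)) : C).
  pose (c2 := fun z => exist _ (c1 z) (Xop_intro _ (Hm2 z)) : tc (Xhat Q M xi X)).
  assert (Ht : forall z, tight Q M xi X (c2 z)).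
  { intros z. apply (tight_intro _ (phi (eta z))); simpl.
    - intros xx x. rewrite <- Txi_etaL. eapply le_trans; [|apply (proj2 Hphi)].
      apply kc_ub2. apply (mu_eta_l M).
    - apply Hu.
    - apply Hc. }
  pose (wz := fun z => exist _ (c2 z) (Ht z) : tc Xt).
  pose (f := fun z => R (wz z)).
  assert (Ha1 : forall z x, phi (eta z) x ⊑ b (eta (f z)) x).
  { intros z x. eapply le_trans; [apply (claimC (c1 z) (phi (eta z)) (Hc z) gy Hgy)|].
    pose proof (HR (eta (wz z)) (y' x)) as E. rewrite eta_nat, Hiso in E.
    rewrite tsXt, eta_nat in E. exact E. }
  assert (Hk : forall z, kk ⊑ psi (eta (f z)) z).
  { intros z. eapply le_trans; [apply Hu|]. apply sup_least; intros v [xx ->].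
    rewrite <- (mu_eta_l M _ (eta (f z))). eapply le_trans; [|apply Hm2].
    apply tens_mono_l. rewrite Txi_etaL. apply xi_mono. apply Ha1. }
  assert (Hpsif : forall xx z, psi xx z = b xx (f z)).
  { intros xx z. apply qle_antisym.
    - change (psi xx z) with (proj1_sig (c1 z) xx).
      rewrite (YH gy Hgy (c1 z) (Hm2 z)).
      pose proof (HR (fmap y' xx) (wz z)) as E. rewrite tsXt, fcomp, fcomp, isomap in E; auto.
    - rewrite <- (tens_kr (b xx (f z))). eapply le_trans; [apply tens_mono_r, Hk|].
      rewrite <- (mu_eta_l M _ xx) at 2. eapply le_trans; [|apply Hm2].
      apply tens_mono_l, Txi_eta. }
  assert (Hk2 : forall z, kk ⊑ phi (eta z) (f z)).
  { intros z. eapply le_trans; [apply (Tcat_refl _ HZ z)|]. eapply le_trans; [apply Hunit|].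
    apply kc_le2; intros XX y HXX. rewrite Hpsif.
    eapply le_trans; [|apply (proj2 Hphi)]. apply kc_ub2; auto. }
  assert (Hphif : forall zz x, phi zz x = b (fmap f zz) x).
  { intros zz x. apply qle_antisym.
    - eapply le_trans; [|apply Hcounit].
      assert (E : mu (fmap (fun z => eta (f z)) zz) = fmap f zz).
      { rewrite <- fcomp. apply (mu_eta_r M). }
      eapply le_trans; [|apply (kc_ub2 _ _ _ _ _ (fmap (fun z => eta (f z)) zz) _ zz); exact E].
      rewrite <- (tens_kl (phi zz x)) at 1. apply tens_mono_l.
      eapply le_trans; [|apply (Txi_ub' _ _ psi (fmap (fun z => (eta (f z), z)) zz))].
      + rewrite fcomp. apply xi_ge_k. intros a; simpl. apply Hk.
      + rewrite fcomp; auto.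
      + rewrite fcomp; simpl; apply (fmap_id M).
    - eapply le_trans; [|apply (proj2 Hphi)].
      eapply le_trans; [|apply (kc_ub2 _ _ _ _ _ (fmap eta zz) zz (fmap f zz)); apply (mu_eta_r M)].
      rewrite <- (tens_kl (b _ x)) at 1. apply tens_mono_l.
      eapply le_trans; [|apply (Txi_ub' _ _ phi (fmap (fun z => (eta z, f z)) zz))].
      + rewrite fcomp. apply xi_ge_k. intros a; simpl. apply Hk2.
      + rewrite fcomp; auto.
      + rewrite fcomp; auto. }
  exists f. split; [|split; intros; [apply Hphif|apply Hpsif]].
  intros zz z. eapply le_trans; [apply Hunit|]. apply kc_le2; intros XX y <-.
  rewrite Hpsif, mu_nat. eapply le_trans; [|apply Tcat_trans; auto]. apply tens_mono_l.
  eapply le_trans; [|apply (Txi_mapL _ _ _ b (fmap f))].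
  apply Txi_mono. intros a c. rewrite Hphif. apply le_refl.
Qed.

End YX.

Theorem main_gen (X : Tgraph Q M) (HX : is_Tcat Q M xi X) :
  (L_complete Q M xi X <-> L_injective Q M xi X) /\ (L_complete Q M xi X <-> prop_iii X).
Proof.
  split; split; intros H0.
  - apply complete_injective; auto.
  - apply iii_complete; auto. apply injective_iii; auto.
  - apply injective_iii; auto. apply complete_injective; auto.
  - apply iii_complete; auto.
Qed.
End S.

Theorem mainTheorem16 (Q : quantale) (M : monad) (xi : T M Q -> Q)
  (HT1 : T_one M) (Hwpb : T_weak_pullbacks M) (Hmu : mu_weak_pullbacks M)
  (Hxi : strict_topological_theory Q M xi)
  (X : Tgraph Q M) (HX : is_Tcat Q M xi X) :
  (L_complete Q M xi X <-> L_injective Q M xi X) /\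
  (L_complete Q M xi X <->
     exists R : tcar Q M (Xtilde Q M xi X) -> tcar Q M X,
       Tfunctor Q M (Xtilde Q M xi X) X R /\
       exists yt : tcar Q M X -> tcar Q M (Xtilde Q M xi X),
         (forall x xx, tilde_fun Q M xi X (yt x) xx = yoneda Q M X x xx) /\
         fiso Q M X X (fun x => R (yt x)) (fun x => x)).
Proof.
  exact (main_gen Q M xi HT1 Hwpb Hmu Hxi X HX).
Qed.
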